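(* Let $X$ be a shift space which is eventually dendric with threshold $n$, let $U\subseteq\mathcal L(X)$ be a finite bifix code which is two-sided $X$-complete, and let $Y$ be the complete bifix decoding of $X$ with respect to $U$. Then $Y$ is eventually dendric with threshold $n$.
   Context: $A$ is a finite alphabet; a shift space is a closed shift-invariant subset $X\subseteq A^{\mathbb Z}$; $\mathcal L(X)$ is its set of finite factors. For a shift space $Z$ over an alphabet $C$ and $w\in\mathcal L(Z)$, $\mathcal E_1(w)$ is the undirected bipartite graph with vertex set the disjoint union of $\{a\in C: aw\in\mathcal L(Z)\}$ and $\{b\in C: wb\in\mathcal L(Z)\}$ and an edge $(a,b)$ iff $awb\in\mathcal L(Z)$; $Z$ is eventually dendric with threshold $n$ if $\mathcal E_1(w)$ is a tree for every $w\in\mathcal L(Z)$ of length $\ge n$. A bifix code is a set of words none of which is a proper prefix or a proper suffix of another. A set $U\subseteq\mathcal L(X)$ is right (resp. left) $X$-complete if every long enough word of $\mathcal L(X)$ has a prefix (resp. suffix) in $U$, and two-sided $X$-complete if it is both. Given such a finite bifix code $U$, a coding morphism is a bijection $\varphi:B\to U$ from an alphabet $B$, extended to a morphism $B^*\to A^*$; the set $\varphi^{-1}(\mathcal L(X))$ is the language of a shift space $Y\subseteq B^{\mathbb Z}$, called the complete bifix decoding of $X$ with respect to $U$. *)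

(* Defs.v *)
From Stdlib Require Import ZArith Relations.
From mathcomp Require Import all_boot.
Set Implicit Arguments. Unset Strict Implicit. Unset Printing Implicit Defensive.

Section Shifts.
Variable A : finType.

Definition shift (x : Z -> A) : Z -> A := fun i => x (Z.add i 1%Z).

Definition window (x : Z -> A) (i : Z) (n : nat) : seq A :=
  mkseq (fun k => x (Z.add i (Z.of_nat k))) n.

(* X is closed in the product topology: a point all of whose cylinder
   neighbourhoods (centered windows [-n,n]) meet X belongs to X. *)
Definition closed_set (X : (Z -> A) -> Prop) : Prop :=
  forall x, (forall n : nat, exists y, X y /\
              forall i : Z, (Z.abs_nat i <= n)%N -> y i = x i) -> X x.

Definition shift_invariant (X : (Z -> A) -> Prop) : Prop :=
  forall x, X x <-> X (shift x).

Definition is_shift_space (X : (Z -> A) -> Prop) : Prop :=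
  closed_set X /\ shift_invariant X.

Definition Lang (X : (Z -> A) -> Prop) (w : seq A) : Prop :=
  exists x i, X x /\ window x i (size w) = w.

Section Graphs.
Variable V : eqType.
Variable P : V -> Prop.
Variable E : V -> V -> Prop.

Definition graph_connected : Prop :=
  forall u v, P u -> P v ->
    clos_refl_trans V (fun x y => [/\ P x, P y & E x y]) u v.

Definition graph_acyclic : Prop :=
  ~ exists (u : V) (c' : seq V),
      let c := u :: c' in
      [/\ uniq c, (3 <= size c)%N, (forall z, z \in c -> P z) &
          forall i, (i < size c)%N ->
             E (nth u c i) (nth u c (i.+1 %% size c))].

Definition graph_is_tree : Prop := graph_connected /\ graph_acyclic.
End Graphs.

(* vertices: inl a for left extensions a (a w in L), inr b for right
   extensions b (w b in L); edges (a,b) iff a w b in L (undirected). *)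
Definition ext_vertex (L : seq A -> Prop) (w : seq A) (v : A + A) : Prop :=
  match v with
  | inl a => L (a :: w)
  | inr b => L (rcons w b)
  end.

Definition ext_edge (L : seq A -> Prop) (w : seq A) (u v : A + A) : Prop :=
  match u, v with
  | inl a, inr b => L (a :: rcons w b)
  | inr b, inl a => L (a :: rcons w b)
  | _, _ => False
  end.

Definition E1_is_tree (L : seq A -> Prop) (w : seq A) : Prop :=
  graph_is_tree (ext_vertex L w) (ext_edge L w).

Definition eventually_dendric (Z : (Z -> A) -> Prop) (n : nat) : Prop :=
  forall w, Lang Z w -> (n <= size w)%N -> E1_is_tree (Lang Z) w.

Definition bifix_code (U : seq (seq A)) : Prop :=
  forall u v, u \in U -> v \in U ->
    (prefix u v -> u = v) /\ (suffix u v -> u = v).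

Definition right_complete (X : (Z -> A) -> Prop) (U : seq (seq A)) : Prop :=
  exists N : nat, forall w, Lang X w -> (N <= size w)%N ->
    exists2 u, u \in U & prefix u w.

Definition left_complete (X : (Z -> A) -> Prop) (U : seq (seq A)) : Prop :=
  exists N : nat, forall w, Lang X w -> (N <= size w)%N ->
    exists2 u, u \in U & suffix u w.

Definition two_sided_complete (X : (Z -> A) -> Prop) (U : seq (seq A)) : Prop :=
  right_complete X U /\ left_complete X U.
End Shifts.

Definition morph_ext (A B : Type) (phi : B -> seq A) (v : seq B) : seq A :=
  flatten (map phi v).

(* Main.v *)
Require Import Defs.
From Stdlib Require Import ZArith Relations.
From mathcomp Require Import all_boot.
From Stdlib Require Import Classical ClassicalEpsilon.
From mathcomp Require Import zify.
Set Implicit Arguments. Unset Strict Implicit. Unset Printing Implicit Defensive.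


Definition gstep (V : Type) (P : V -> Prop) (E : V -> V -> Prop) x y := [/\ P x, P y & E x y].
Definition gwo (V : Type) (P : V -> Prop) (E : V -> V -> Prop) a b x y :=
  [/\ P x, P y, E x y & ~ ((x = a /\ y = b) \/ (x = b /\ y = a))].
Definition Tree' (V : eqType) (P : V -> Prop) (E : V -> V -> Prop) := graph_connected P E /\
  forall a b, P a -> P b -> E a b -> ~ clos_refl_trans V (gwo P E a b) b a.

Lemma crt_sym (V : Type) (R : V -> V -> Prop) :
  (forall x y, R x y -> R y x) -> forall x y, clos_refl_trans V R x y -> clos_refl_trans V R y x.
Proof.
move=> hs x y; elim=> [u v /hs h|u|u v w _ h1 _ h2]; first exact: rt_step.
  exact: rt_refl.
exact: rt_trans h2 h1.
Qed.

Lemma crt_mono (V : Type) (R R' : V -> V -> Prop) :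
  (forall x y, R x y -> R' x y) -> forall x y, clos_refl_trans V R x y -> clos_refl_trans V R' x y.
Proof.
move=> hs x y; elim=> [u v /hs h|u|u v w _ h1 _ h2]; first exact: rt_step.
  exact: rt_refl.
exact: rt_trans h1 h2.
Qed.

Lemma gwo_sym (V : Type) (P : V -> Prop) E a b :
  (forall x y, E x y -> E y x) -> forall x y, gwo P E a b x y -> gwo P E a b y x.
Proof.
move=> hs x y [h1 h2 h3 h4]; split=> //; first exact: hs.
by move=> h; apply: h4; tauto.
Qed.

Lemma gwo_swap (V : Type) (P : V -> Prop) E a b x y : gwo P E a b x y -> gwo P E b a x y.
Proof. by move=> [h1 h2 h3 h4]; split=> //; tauto. Qed.

Lemma crt_P (V : Type) (P : V -> Prop) E a b x y :
  clos_refl_trans V (gwo P E a b) x y -> P x -> P y.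
Proof.
move=> h; have {h} := clos_rt_rt1n _ _ _ _ h.
by elim=> // u v w [] _ pv _ _ _ IH _; exact: IH.
Qed.

Lemma gstep_gwo (V : Type) (P : V -> Prop) E a b x y : gwo P E a b x y -> gstep P E x y.
Proof. by case. Qed.

Section Transfer.
Variables (V V' : eqType) (P : V -> Prop) (E : V -> V -> Prop)
  (P' : V' -> Prop) (E' : V' -> V' -> Prop) (R : V -> V' -> Prop).
Hypothesis Rfun : forall v w1 w2, R v w1 -> R v w2 -> w1 = w2.
Hypothesis Rinj : forall v1 v2 w, R v1 w -> R v2 w -> v1 = v2.
Hypothesis Rtot : forall v, P v -> exists w, R v w.
Hypothesis Rsur : forall w, P' w -> exists v, R v w.
Hypothesis RP : forall v w, R v w -> (P v <-> P' w).
Hypothesis RE : forall v1 v2 w1 w2, R v1 w1 -> R v2 w2 -> P v1 -> P v2 -> (E v1 v2 <-> E' w1 w2).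

Lemma tree_transfer : Tree' P E -> Tree' P' E'.
Proof.
move=> [hc ha]; split.
  move=> u' v' pu' pv'.
  have [u ru] := Rsur pu'; have [v rv] := Rsur pv'.
  have h0 := hc u v ((RP ru).2 pu') ((RP rv).2 pv').
  have h := clos_rt_rt1n _ _ _ _ h0; clear h0; elim: h u' v' ru rv {pu' pv'} => [x|x m y [px pm exm] _ IH] u' v' ru rv.
    by rewrite (Rfun ru rv); apply: rt_refl.
  have [m' rm] := Rtot pm.
  apply: rt_trans (IH _ _ rm rv); apply: rt_step; split.
  - exact: (RP ru).1. - exact: (RP rm).1. - exact: (RE ru rm px pm).1.
move=> a' b' pa' pb' eab' hcr.
have [a ra] := Rsur pa'; have [b rb] := Rsur pb'.
have pa := (RP ra).2 pa'; have pb := (RP rb).2 pb'.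
apply: (ha a b pa pb ((RE ra rb pa pb).2 eab')).
have h := clos_rt_rt1n _ _ _ _ hcr.
have key : forall x' y', clos_refl_trans_1n V' (gwo P' E' a' b') x' y' -> y' = a' ->
  forall x, R x x' -> clos_refl_trans V (gwo P E a b) x a.
  move=> x' y'; elim=> [u|u m y [pu pm eum hne] _ IH] ey x rx.
    subst; rewrite (Rinj rx ra); exact: rt_refl.
  have [mm rm] := Rsur pm.
  apply: rt_trans (IH ey _ rm); apply: rt_step.
  have px := (RP rx).2 pu; have pmm := (RP rm).2 pm.
  split=> //; first exact: (RE rx rm px pmm).2.
  move=> [[e1 e2]|[e1 e2]]; apply: hne; subst.
    by left; split; [exact: Rfun rx ra | exact: Rfun rm rb].
  by right; split; [exact: Rfun rx rb | exact: Rfun rm ra].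
exact: key h erefl b rb.
Qed.
End Transfer.


Definition dec (Q : Prop) : bool := if excluded_middle_informative Q then true else false.
Lemma decP (Q : Prop) : reflect Q (dec Q).
Proof. rewrite /dec; case: excluded_middle_informative => h; by constructor. Qed.

Section Equiv.
Variables (V : eqType) (P : V -> Prop) (E : V -> V -> Prop).

Lemma defs_of_tree : Tree' P E -> graph_is_tree P E.
Proof.
move=> [hc ha]; split=> //.
move=> [u [c' [huniq hsize hP hE]]].
set c := u :: c' in huniq hsize hP hE.
set k := size c in hsize hE.
have nthP : forall i, i < k -> P (nth u c i) by move=> i hi; apply: hP; apply: mem_nth.
have neq : forall i j, i < k -> j < k -> nth u c i = nth u c j -> i = j.
  by move=> i j hi hj e; apply/eqP; rewrite -(nth_uniq u hi hj huniq) e.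
have E01 : E u (nth u c 1).
  have := hE 0 (leq_trans (isT : 0 < 3) hsize).
  by rewrite (modn_small (leq_trans (isT : 1 < 3) hsize)).
apply: (ha u (nth u c 1) (hP u (mem_head _ _)) (nthP 1 (leq_trans (isT : 1 < 3) hsize)) E01).
have key : forall d j, j + d = k.-1 -> 0 < j ->
    clos_refl_trans V (gwo P E u (nth u c 1)) (nth u c j) u.
  elim=> [|d IH] j hjd hj.
    rewrite addn0 in hjd.
    have hjk : j < k by rewrite hjd; case: (k) hsize.
    have := hE j hjk; rewrite hjd prednK ?modnn; last by case: (k) hsize.
    rewrite -hjd => Ej.
    apply: rt_step; split.
    - exact: nthP. - exact: hP (mem_head _ _). - exact: Ej.
    move=> [[e1 e2]|[e1 e2]].
      by have := neq j 0 hjk (leq_trans (isT : 0 < 3) hsize) e1 => h; rewrite h in hj.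
    have := neq j 1 hjk (leq_trans (isT : 1 < 3) hsize) e1 => h.
    by move: hjd hsize; rewrite h; lia.
  have hjk : j.+1 < k by move: hjd hsize; lia.
  apply: rt_trans (IH j.+1 _ isT); last by move: hjd; lia.
  have := hE j (ltnW hjk); rewrite modn_small // => Ej.
  apply: rt_step; split.
  - exact: nthP (ltnW hjk). - exact: nthP. - exact: Ej.
  move=> [[e1 e2]|[e1 e2]].
    by have := neq j 0 (ltnW hjk) (leq_trans (isT : 0 < 3) hsize) e1 => h; rewrite h in hj.
  have := neq j 1 (ltnW hjk) (leq_trans (isT : 1 < 3) hsize) e1 => h; subst j.
  by have := neq 2 0 hjk (leq_trans (isT : 0 < 3) hsize) e2.
apply: (key (k - 2) 1 _ isT).
by move: hsize; rewrite /k; case: (size c) => [|[|[|m]]] //= _; rewrite subn2.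
Qed.

Lemma tree_of_defs : (forall x, ~ E x x) -> graph_is_tree P E -> Tree' P E.
Proof.
move=> hirr [hc hac]; split=> // a b pa pb eab hcr.
apply: hac.
pose e := fun x y => dec (gwo P E a b x y).
have hpath : forall x y, clos_refl_trans_1n V (gwo P E a b) x y ->
    exists p, path e x p /\ last x p = y.
  move=> x y; elim=> [u|u m w h _ [p [hp hl]]]; first by exists [::].
  exists (m :: p); split => //=; rewrite hp andbT; exact/decP.
have [p [hp hl]] := hpath _ _ (clos_rt_rt1n _ _ _ _ hcr).
move: hl; case: (shortenP hp) => p' hp' hu _ hl.
have pP0 : forall q x, path e x q -> forall z, z \in q -> P z.
  elim=> // m q IH x /= /andP[/decP [_ pm _ _] hq] z.
  rewrite inE => /orP[/eqP -> //|]; exact: IH hq z.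
have pP := pP0 _ _ hp'.
exists b, p'; split => //.
- case: p' hp' hl {hu pP} => [|m [|m' q]] //=.
    by move=> _ hba; subst; case: (hirr a).
  by rewrite andbT => /decP [_ _ _ h] hm; subst m; case: h; right.
- by move=> z; rewrite inE => /orP[/eqP -> //|]; exact: pP.
move=> i; rewrite ltnS leq_eqVlt => /orP[/eqP ->|hi].
  by rewrite modnn /= -last_nth hl.
rewrite (modn_small (hi : i.+1 < (size p').+1)) /=.
by have /(pathP b) h := hp'; have /decP [_ _ ? _] := h i hi.
Qed.
End Equiv.


Section Subst.
Variable V : eqType.
Variables (P1 P2 : V -> Prop) (E1 E2 : V -> V -> Prop) (N : V -> Prop) (z : V).
Hypothesis E1sym : forall x y, E1 x y -> E1 y x.
Hypothesis E2sym : forall x y, E2 x y -> E2 y x.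
Hypothesis hNP : forall x, N x -> P2 x.
Hypothesis hz : ~ P2 z.
Definition Ov x := P2 x /\ ~ N x.
Hypothesis hP1 : forall x, P1 x <-> (x = z /\ exists y, N y) \/ Ov x.
Hypothesis hE : forall x y, Ov x -> Ov y -> (E1 x y <-> E2 x y).
Hypothesis hNE : forall x y, N x -> E2 x y -> P2 y -> Ov y /\ E1 z y.
Hypothesis hlift : forall y, Ov y -> E1 z y -> exists x, N x /\ E2 x y.
Definition PH x := N x \/ (Ov x /\ E1 z x).

Lemma subst_tree : Tree' P1 E1 -> Tree' PH E2 -> Tree' P2 E2.
Proof.
move=> [hc1 ha1] [hcH haH].
have PHP2 : forall x, PH x -> P2 x by move=> x [/hNP //|[[]]].
have Hreach : forall x y, N x -> N y -> clos_refl_trans V (gstep P2 E2) x y.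
  move=> x y nx ny; apply: (crt_mono _ (hcH x y (or_introl nx) (or_introl ny))).
  by move=> u v [pu pv e]; split=> //; apply: PHP2.
have P1z : forall x, N x -> P1 z by move=> x nx; apply/hP1; left; split=> //; exists x.
pose corr x u := (N x /\ u = z) \/ (~ N x /\ u = x).
split.
  have lift : forall u v, clos_refl_trans_1n V (gstep P1 E1) u v ->
      forall x y, P2 x -> P2 y -> corr x u -> corr y v -> clos_refl_trans V (gstep P2 E2) x y.
    move=> u v; elim=> [u0|u0 u' v0 [pu pu' eu] _ IH] x y px py cx cy.
      case: cx => [[nx e]|[nx e]]; case: cy => [[ny e']|[ny e']].
      - exact: Hreach. - by exfalso; apply: hz; rewrite -e e'. - by exfalso; apply: hz; rewrite -e' e.
      - rewrite -e -e'; exact: rt_refl.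
    case: cx => [[nx e]|[nx e]]; subst.
      case/hP1: pu' => [[e _]|ou'].
        by subst u'; apply: IH => //; left.
      have [x0 [nx0 ex0]] := hlift ou' eu.
      apply: rt_trans (Hreach x x0 nx nx0) _.
      apply: rt_trans (IH _ _ ou'.1 py _ cy); last by right; split=> //; case: ou'.
      by apply: rt_step; split=> //; [exact: hNP|case: ou'].
    have ox : Ov x by split.
    case/hP1: pu' => [[e _]|ou'].
      subst u'; have [x0 [nx0 ex0]] := hlift ox (E1sym eu).
      apply: rt_trans (IH _ _ (hNP nx0) py _ cy); last by left.
      by apply: rt_step; split=> //; [exact: hNP|exact: E2sym].
    apply: rt_trans (IH _ _ ou'.1 py _ cy); last by right; split=> //; case: ou'.
    by apply: rt_step; split=> //; [case: ou'|apply/hE].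
  have ex : forall x, P2 x -> exists u, P1 u /\ corr x u.
    move=> x px; case: (classic (N x)) => nx.
      by exists z; split; [exact: P1z nx|left].
    by exists x; split; [apply/hP1; right|right].
  move=> x y px py.
  have [u [pu cu]] := ex x px; have [v [pv cv]] := ex y py.
  exact: lift (clos_rt_rt1n _ _ _ _ (hc1 u v pu pv)) x y px py cu cv.
have ncase : forall a b, N a -> Ov b -> E2 a b -> ~ clos_refl_trans V (gwo P2 E2 a b) a b.
  move=> a b na ob eab hcr.
  have P1a := P1z a na.
  pose CH x := clos_refl_trans V (gwo PH E2 a b) a x.
  pose D v x := clos_refl_trans V (gwo P1 E1 z v) v x.
  pose C x := CH x \/ exists v, [/\ CH v, Ov v & D v x].
  have PHa : PH a by left.
  have CHP : forall x, CH x -> PH x by move=> x h; exact: crt_P h PHa.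
  have Dfacts : forall v x, CH v -> Ov v -> D v x -> Ov x /\ (E1 z x -> x = v).
    move=> v x cv ov dvx.
    have ezv : E1 z v by case: (CHP v cv) => [nv|[]//]; case: ov.
    have P1v : P1 v by apply/hP1; right.
    have P1x : P1 x := crt_P dvx P1v.
    have nz : x <> z.
      by move=> exz; subst x; apply: (ha1 z v P1a P1v ezv dvx).
    split.
      by case/hP1: P1x => [[]|].
    move=> ezx; apply: NNPP => nxv; apply: (ha1 z v P1a P1v ezv).
    apply: rt_trans dvx _; apply: rt_step; split=> //; first exact: E1sym.
    by move=> [[]|[]].
  have notCb : ~ C b.
    have PHb : PH b by right; split=> //; exact: (hNE na eab ob.1).2.
    have nCH : ~ CH b.
      move=> h; apply: (haH a b PHa PHb eab).
      by apply: crt_sym h => x y; apply: gwo_sym.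
    move=> [//|[v [cv ov dvb]]].
    have [_ h] := Dfacts v b cv ov dvb.
    by apply: nCH; rewrite (h (hNE na eab ob.1).2).
  apply: notCb.
  have step : forall x y, clos_refl_trans_1n V (gwo P2 E2 a b) x y -> C x -> C y.
    move=> x y; elim=> // x0 y0 w [px py exy hne] _ IH cx; apply: IH.
    case: cx => [cx|[v [cv ov dvx]]].
      case: (CHP x0 cx) => [nx|[ox ezx]].
        have [oy ezy] := hNE nx exy py.
        left; apply: rt_trans cx (rt_step _ _ _ _ _).
        by split; [left|right; split|exact: exy|exact: hne].
      case: (classic (N y0)) => ny.
        left; apply: rt_trans cx (rt_step _ _ _ _ _).
        by split; [right; split|left|exact: exy|exact: hne].
      right; exists x0; split=> //; apply: rt_step; split.
      - by apply/hP1; right. - by apply/hP1; right.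
      - by apply/hE.
      - by move=> [[e1 e2]|[e1 e2]]; exfalso; apply: hz; [rewrite -e1; case: ox|rewrite -e2].
    have [ox hx] := Dfacts v x0 cv ov dvx.
    case: (classic (N y0)) => ny.
      have ezx := (hNE ny (E2sym exy) px).2.
      have exv := hx ezx; subst x0.
      left; apply: rt_trans cv (rt_step _ _ _ _ _).
      by split; [right; split|left|exact: exy|exact: hne].
    right; exists v; split=> //; apply: rt_trans dvx (rt_step _ _ _ _ _); split.
    - by apply/hP1; right. - by apply/hP1; right. - by apply/hE.
    move=> [[e1 e2]|[e1 e2]].
      by exfalso; apply: hz; rewrite -e1; case: ox.
    by exfalso; apply: hz; rewrite -e2.
  exact: step (clos_rt_rt1n _ _ _ _ hcr) (or_introl (rt_refl _ _ _)).
move=> a b pa pb eab hcr.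
case: (classic (N a)) => na.
  have ob := (hNE na eab pb).1.
  apply: (ncase a b na ob eab).
  by apply: crt_sym hcr => x y; apply: gwo_sym.
case: (classic (N b)) => nb.
  have oa := (hNE nb (E2sym eab) pa).1.
  apply: (ncase b a nb oa (E2sym eab)).
  by apply: crt_mono hcr => x y; apply: gwo_swap.
have oa : Ov a by split. have ob : Ov b by split.
have P1a : P1 a by apply/hP1; right.
have P1b : P1 b by apply/hP1; right.
apply: (ha1 a b P1a P1b ((hE oa ob).2 eab)).
have proj : forall x y, clos_refl_trans_1n V (gwo P2 E2 a b) x y ->
    forall u v, corr x u -> corr y v -> clos_refl_trans V (gwo P1 E1 a b) u v.
  move=> x y; elim=> [x0|x0 m y0 [px pm exm hne] _ IH] u v cx cy.
    case: cx => [[nx e]|[nx e]]; case: cy => [[ny e']|[ny e']]; subst => //; try exact: rt_refl.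
  have za : z <> a by move=> e; exfalso; apply: hz; rewrite e; case: oa.
  have zb : z <> b by move=> e; exfalso; apply: hz; rewrite e; case: ob.
  case: (classic (N m)) => nm.
    apply: rt_trans (IH z v (or_introl (conj nm erefl)) cy).
    case: cx => [[nx e]|[nx e]]; subst.
      by case: ((hNE nx exm pm).1).
    have ezx := (hNE nm (E2sym exm) px).2.
    apply: rt_step; split.
    - by apply/hP1; right. - exact: P1z nm. - exact: E1sym.
    by move=> [[_ e]|[_ e]]; [apply: zb|apply: za].
  apply: rt_trans (IH m v (or_intror (conj nm erefl)) cy).
  have om : Ov m by split.
  case: cx => [[nx e]|[nx e]]; subst.
    have ezm := (hNE nx exm pm).2.
    apply: rt_step; split.
    - exact: P1z nx. - by apply/hP1; right. - exact: ezm.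
    by move=> [[e _]|[e _]]; [apply: za|apply: zb].
  have ox : Ov x0 by split.
  apply: rt_step; split.
  - by apply/hP1; right. - by apply/hP1; right. - by apply/hE.
  exact: hne.
have cb : corr b b by right.
have ca : corr a a by right.
exact: (proj _ _ (clos_rt_rt1n _ _ _ _ hcr) b a cb ca).
Qed.
End Subst.


Section Words.
Variable A : finType.
Implicit Types (L : seq A -> Prop) (W s t u : seq A) (S T : seq (seq A)).

Definition Gv L W S T (x : seq A + seq A) : Prop :=
  match x with inl s => s \in S /\ L (s ++ W) | inr t => t \in T /\ L (W ++ t) end.
Definition Ge L W (x y : seq A + seq A) : Prop :=
  match x, y with
  | inl s, inr t => L (s ++ W ++ t)
  | inr t, inl s => L (s ++ W ++ t)
  | _, _ => False end.

Definition factorial L := forall u v w, L (u ++ v ++ w) -> L v.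
Definition lext L := forall w, L w -> exists a, L (a :: w).
Definition rext L := forall w, L w -> exists a, L (rcons w a).

Definition goodL L S :=
  (forall s1 s2, s1 \in S -> s2 \in S -> suffix s1 s2 -> s1 = s2) /\
  (forall z, L z -> (exists2 s, s \in S & suffix s z) \/ (exists2 s, s \in S & suffix z s /\ z != s)).
Definition goodR L S :=
  (forall s1 s2, s1 \in S -> s2 \in S -> prefix s1 s2 -> s1 = s2) /\
  (forall z, L z -> (exists2 s, s \in S & prefix s z) \/ (exists2 s, s \in S & prefix z s /\ z != s)).

Definition Alph : seq (seq A) := [seq [:: a] | a <- enum A].

Lemma mem_Alph s : s \in Alph <-> exists c, s = [:: c].
Proof.
split; first by case/mapP => c _ ->; exists c.
by move=> [c ->]; apply: map_f; rewrite mem_enum.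
Qed.

Lemma Ge_sym L W x y : Ge L W x y -> Ge L W y x.
Proof. by case: x => ?; case: y => ? //=. Qed.

Lemma Ge_irr L W x : ~ Ge L W x x.
Proof. by case: x => ? /=. Qed.

Lemma fact_l L : factorial L -> forall u v, L (u ++ v) -> L u.
Proof. move=> hf u v h; apply: (hf [::] u v); exact: h. Qed.
Lemma fact_r L : factorial L -> forall u v, L (u ++ v) -> L v.
Proof. move=> hf u v h; apply: (hf u v [::]); by rewrite cats0. Qed.

Lemma cat_injl u s1 s2 : s1 ++ u = s2 ++ u -> s1 = s2.
Proof.
move=> e; have hs : size s1 = size s2.
  by have := congr1 size e; rewrite !size_cat; lia.
by apply/eqP; have := @eqseq_cat _ s1 s2 u u hs; rewrite e !eqxx andbT => <-.
Qed.

Lemma suffix_consE s c w : suffix s (c :: w) -> s = c :: w \/ suffix s w.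
Proof.
case/suffixP => [[|d p]] /= e; first by left.
by right; case: e => _ ->; exact: suffix_suffix.
Qed.

Lemma suffix_size_eq s w : suffix s w -> size s = size w -> s = w.
Proof.
case/suffixP => p ->; rewrite size_cat => h.
by case: p h => //= ? ? ; lia.
Qed.

Lemma tree_ext (V : eqType) (P P' : V -> Prop) (E E' : V -> V -> Prop) :
  (forall x, P x <-> P' x) -> (forall x y, E x y <-> E' x y) -> Tree' P E -> Tree' P' E'.
Proof.
move=> hP hE; apply: (@tree_transfer V V P E P' E' (fun x y => x = y)).
- by move=> ? ? ? -> ->. - by move=> ? ? ? -> ->.
- by move=> v _; exists v. - by move=> w _; exists w.
- by move=> v w ->. - by move=> ? ? ? ? -> ->.
Qed.

Lemma star L W S T : factorial L -> [::] \in S -> (forall s, s \in S -> s = [::]) ->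
  Tree' (Gv L W S T) (Ge L W).
Proof.
move=> hf h0 hS.
have toc : forall x, Gv L W S T x -> clos_refl_trans _ (gstep (Gv L W S T) (Ge L W)) x (inl [::]).
  case=> [s [sS hs]|t [tT ht]].
    by rewrite (hS s sS); apply: rt_refl.
  apply: rt_step; split=> //; split=> //; first exact: (fact_l hf ht).
split.
  move=> x y px py; apply: rt_trans (toc x px) _.
  apply: crt_sym (toc y py); by move=> ? ? [? ? ?]; split=> //; apply: Ge_sym.
have key : forall t a b, ((a = inl [::] /\ b = inr t) \/ (a = inr t /\ b = inl [::])) ->
    forall y, clos_refl_trans_1n _ (gwo (Gv L W S T) (Ge L W) a b) (inr t) y -> y = inr t.
  move=> t a b hab y h; move: {1 3}(inr t) (erefl (@inr (seq A) _ t)) h => x ex h.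
  elim: h ex => // x0 m y0 [px pm e hne] _ IH ex; subst x0.
  case: m pm e hne {IH} => [s [sS _]|//] _ hne.
  by exfalso; apply: hne; rewrite (hS s sS); case: hab => [[-> ->]|[-> ->]]; tauto.
move=> a b pa pb eab hcr.
case: a b pa pb eab hcr => [s|t] [s'|t'] //= pa pb eab hcr.
  move: pa => [/hS e _]; subst s.
  have := key t' (inl [::]) (inr t') (or_introl (conj erefl erefl)) _ (clos_rt_rt1n _ _ _ _ hcr).
  by [].
move: pb => [/hS e _]; subst s'.
have hcr' := crt_sym (fun x y => @gwo_sym _ _ _ _ _ (@Ge_sym L W) x y) hcr.
have := key t (inr t) (inl [::]) (or_intror (conj erefl erefl)) _ (clos_rt_rt1n _ _ _ _ hcr').
by [].
Qed.
End Words.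
Arguments Alph {A}.


Section LeftInd.
Variable A : finType.
Implicit Types (W s t u : seq A) (S T : seq (seq A)).
Variables (L : seq A -> Prop) (n : nat) (T : seq (seq A)).
Hypothesis hf : factorial L.
Hypothesis hl : lext L.
Hypothesis hbase : forall W, n <= size W -> Tree' (Gv L W Alph T) (Ge L W).

Lemma exists_max S : S != [::] -> exists2 u, u \in S & forall s, s \in S -> size s <= size u.
Proof.
elim: S => // x S IH _; case: (S =P [::]) => [->|/eqP hS].
  by exists x; rewrite ?mem_head // => s; rewrite inE => /eqP ->.
have [u uS hu] := IH hS.
case: (leqP (size u) (size x)) => h.
  exists x; first exact: mem_head.
  move=> s; rewrite inE => /orP[/eqP -> //|/hu]; move=> h'; exact: leq_trans h' h.
exists u; first by rewrite inE uS orbT.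
move=> s; rewrite inE => /orP[/eqP ->|/hu //]; exact: ltnW.
Qed.

Lemma sum_filter (p : pred (seq A)) S u : u \in S -> ~~ p u ->
  sumn (map size (filter p S)) + size u <= sumn (map size S).
Proof.
elim: S => // x S IH; rewrite inE => /orP[/eqP <-|uS] npu /=.
  rewrite (negbTE npu) addnC leq_add2l.
  elim: (S) => //= y S' IH'; case: (p y) => /=; lia.
case: (p x) => /=; have := IH uS npu; lia.
Qed.

Lemma alph_equiv S W x : goodL L S -> ~~ ([::] \in S) -> ~~ has (fun s => 1 < size s) S ->
  Gv L W S T x <-> Gv L W Alph T x.
Proof.
move=> [hc hm] h0 h1; case: x => [s|t] //=; split; move=> [sS hs]; split=> //.
  apply/mem_Alph; case: s sS hs => [|c [|d q]] sS hs.
  - by rewrite sS in h0. - by exists c.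
  - by exfalso; move/hasPn: h1 => /(_ _ sS).
have [c ec] := (mem_Alph s).1 sS; subst s.
case: (hm [:: c] (fact_l hf hs)) => [[s' s'S /suffix_consE [e|]]|[s' s'S [hsuf hne]]].
- by rewrite -e.
- by rewrite suffixs0 => /eqP e; subst s'; rewrite s'S in h0.
- exfalso; move/hasPn: h1 => /(_ _ s'S); rewrite -leqNgt.
  move: (size_suffix hsuf) => /= h1 h2.
  have: size s' = 1 by move: h1 h2; rewrite /=; lia.
  by move/esym/(suffix_size_eq hsuf) => e; rewrite e eqxx in hne.
Qed.

Lemma leftind : forall S, goodL L S -> forall W, n <= size W -> Tree' (Gv L W S T) (Ge L W).
Proof.
move=> S; have [k] := ubnP (sumn (map size S)); elim: k S => // k IH S hk hS W hW.
have [hc hm] := hS.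
case h0 : ([::] \in S).
  apply: star => // s sS; apply: esym; apply: hc => //; exact: suffix0s.
case h1 : (has (fun s => 1 < size s) S); last first.
  apply: (tree_ext (P := Gv L W Alph T) (E := Ge L W)) => //.
    move=> x; apply: iff_sym; apply: alph_equiv => //; by rewrite ?h0 ?h1.
  exact: hbase.
have [u uS hu] : exists2 u, u \in S & forall s, s \in S -> size s <= size u.
  by apply: exists_max; case: (S) h1.
have hu2 : 1 < size u by case/hasP: h1 => s sS hs; exact: leq_trans hs (hu s sS).
case: u uS hu hu2 => [//|b0 u'] uS hu hu2.
pose isext (s : seq A) := (s != [::]) && (behead s == u').
pose S' := u' :: [seq s <- S | ~~ isext s].
have F1 : u' \notin S.
  apply/negP => h; have := hc _ _ h uS (suffix_cons _ _) => e.
  by have := congr1 size e => /=; lia.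
have isextP : forall s, isext s <-> exists c, s = c :: u'.
  move=> s; split; first by case: s => [//|c q] /andP[_ /eqP /= ->]; exists c.
  by move=> [c ->]; rewrite /isext /= eqxx.
have F2 : forall c, L (c :: u') -> c :: u' \in S.
  move=> c hL; case: (hm _ hL) => [[s sS hsuf]|[s sS [hsuf hne]]].
    case/suffix_consE: hsuf => [<- //|hsuf].
    have := hc _ _ sS uS (suffix_trans hsuf (suffix_cons _ _)) => e; subst s.
    by have := size_suffix hsuf => /=; lia.
  have := size_suffix hsuf; have := hu _ sS => /= h1' h2'.
  have := suffix_size_eq hsuf; rewrite /= => e.
  by rewrite e ?eqxx in hne => //; lia.
have hS' : goodL L S'.
  split.
    move=> s1 s2; rewrite !inE !mem_filter => /orP[/eqP ->|/andP[ns1 s1S]] /orP[/eqP ->|/andP[ns2 s2S]] //.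
    - move=> hsuf; exfalso; case/suffixP: hsuf => [[|c [|d q]]] /= e; subst s2.
      + by rewrite s2S in F1.
      + by move: ns2; rewrite /isext /= eqxx.
      + by have := hu _ s2S; rewrite /= size_cat; lia.
    - move=> hsuf; exfalso.
      have := hc _ _ s1S uS (suffix_trans hsuf (suffix_cons _ _)) => e; subst s1.
      by have := size_suffix hsuf => /=; lia.
    - exact: hc.
  move=> z hz; case: (hm z hz) => [[s sS hsuf]|[s sS [hsuf hne]]].
    case hs : (isext s).
      have [c ec] := (isextP s).1 hs; subst s.
      by left; exists u'; [exact: mem_head|exact: suffix_trans (suffix_cons _ _) hsuf].
    by left; exists s => //; rewrite inE mem_filter hs sS orbT.
  case hs : (isext s).
    have [c ec] := (isextP s).1 hs; subst s.
    case/suffix_consE: hsuf => [e|hsuf]; first by rewrite e eqxx in hne.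
    case: (z =P u') => [->|/eqP hzu].
      by left; exists u'; [exact: mem_head|exact: suffix_refl].
    by right; exists u'; [exact: mem_head|].
  by right; exists s => //; rewrite inE mem_filter hs sS orbT.
have hk' : sumn (map size S') < k.
  have := @sum_filter (fun s => ~~ isext s) S (b0 :: u') uS; rewrite /isext /= eqxx negbK => /(_ isT).
  move: hk => /=; rewrite /S' /isext /=; lia.
have T1 := IH S' hk' hS' W hW.
have T2 : Tree' (Gv L (u' ++ W) Alph T) (Ge L (u' ++ W)).
  by apply: hbase; rewrite size_cat; lia.
pose N (x : seq A + seq A) := match x with inl s => [/\ s \in S, isext s & L (s ++ W)] | inr _ => False end.
have isext_cons : forall c, isext (c :: u') by move=> c; apply/isextP; exists c.
apply: (@subst_tree _ (Gv L W S' T) (Gv L W S T) (Ge L W) (Ge L W) N (inl u')).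
- exact: Ge_sym.
- exact: Ge_sym.
- by case=> [s [sS _ hs]|].
- by move=> [h _]; rewrite h in F1.
- case=> [s|t]; split.
  + move=> [sS' hs]; move: sS'; rewrite inE mem_filter => /orP[/eqP e|/andP[ns sS]].
      subst s; left; split=> //; have [c hc'] := hl hs.
      exists (inl (c :: u')); split=> //; apply: F2; exact: (fact_l hf (u := c :: u') hc').
    right; split; first by split.
    by move=> [_ hx _]; rewrite hx in ns.
  + move=> [[e [y ny]]|[[sS hs] nN]].
      case: e => ->; case: y ny => [s0 [s0S hx hs0]|//].
      have [c ec] := (isextP s0).1 hx; subst s0.
      by split; [exact: mem_head|exact: (fact_r hf (u := [:: c]) hs0)].
    split=> //; rewrite inE mem_filter sS andbT; apply/orP; right; apply/negP => hx; apply: nN.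
    by split.
  + by move=> h; right; split.
  + by move=> [[e _]|[h _]].
- by move=> *; exact: iff_refl.
- case=> [s|] // [s'|t] // [sS hx hs] e py; split; first by split.
  have [c ec] := (isextP s).1 hx; subst s.
  exact: (fact_r hf (u := [:: c]) e).
- case=> [s _ //|t [py _] e].
  have [c hc'] := hl e.
  exists (inl (c :: u')); split=> //; split.
  + apply: F2; exact: (fact_l hf (u := c :: u') hc').
  + exact: isext_cons.
  + have hh : L (((c :: u') ++ W) ++ t) by rewrite -catA.
    exact: (fact_l hf (u := (c :: u') ++ W) (v := t) hh).
- exact: T1.
pose g (x : seq A + seq A) := match x with inl s => inl (s ++ u') | inr t => inr t end.
apply: (@tree_transfer _ _ (Gv L (u' ++ W) Alph T) (Ge L (u' ++ W)) _ _ (fun v w => w = g v)) T2.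
- by move=> ? ? ? -> ->.
- move=> v1 v2 w -> e; case: v1 v2 e => [s1|t1] [s2|t2] //= [] e.
    by rewrite (cat_injl e).
- by move=> v _; exists (g v).
- case=> [s|t].
    move=> [[sS hx hs]|[_ []]].
    have [c ec] := (isextP s).1 hx; subst s.
    by exists (inl [:: c]).
  by move=> _; exists (inr t).
- move=> v w ->; case: v => [s|t] /=; split.
  + move=> [/mem_Alph [c ->] hs]; left; split; [|exact: isext_cons|exact: hs].
    apply: F2; exact: (fact_l hf (u := c :: u') hs).
  + move=> [[sS hx hs]|[_ []]].
    have [c ec] := (isextP _).1 hx.
    have es : s = [:: c] by apply: (cat_injl (u := u')); rewrite ec.
    subst s; split; first by apply/mem_Alph; exists c.
    by rewrite catA.
  + move=> [tT ht]; right; split.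
      split; last by [].
      split=> //; rewrite -catA in ht; exact: (fact_r hf (u := u') ht).
    by rewrite /= -catA in ht.
  + move=> [[]|[[[tT _] _] h]]; split=> //; by rewrite -catA.
- move=> v1 v2 w1 w2 -> -> _ _.
  case: v1 v2 => [s1|t1] [s2|t2] //=; by rewrite -!catA.
Qed.
End LeftInd.


Section Rev.
Variable A : finType.
Implicit Types (W s t u : seq A) (S T : seq (seq A)).
Variable L : seq A -> Prop.
Definition Lr := fun w : seq A => L (rev w).

Lemma fact_rev : factorial L -> factorial Lr.
Proof. by move=> hf u v w; rewrite /Lr !rev_cat -catA => /hf. Qed.

Lemma lext_rev : rext L -> lext Lr.
Proof. by move=> hr w /hr [a h]; exists a; rewrite /Lr rev_cons. Qed.

Lemma good_rev T : goodR L T -> goodL Lr (map rev T).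
Proof.
move=> [hc hm]; split.
  move=> s1 s2 /mapP [t1 t1T ->] /mapP [t2 t2T ->]; rewrite suffix_rev => h.
  by rewrite (hc _ _ t1T t2T h).
move=> z hz; case: (hm _ hz) => [[s sT hs]|[s sT [hs hne]]].
  by left; exists (rev s); [exact: map_f|rewrite suffix_revLR].
right; exists (rev s); first exact: map_f.
split; first by rewrite -prefix_revLR.
by apply: contra hne => /eqP ->; rewrite revK.
Qed.

Definition sw (x : seq A + seq A) : seq A + seq A :=
  match x with inl s => inr (rev s) | inr t => inl (rev t) end.

Lemma rev_inj : injective (@rev A).
Proof. exact: inv_inj (@revK A). Qed.

Lemma sw_inj : injective sw.
Proof. by case=> [s|t] [s'|t'] //= [] /rev_inj ->. Qed.

Lemma sw_P S T W x : Gv L W S T x <-> Gv Lr (rev W) (map rev T) (map rev S) (sw x).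
Proof.
case: x => [s|t] /=; by rewrite (mem_map rev_inj) /Lr rev_cat !revK.
Qed.

Lemma sw_E W x y : Ge L W x y <-> Ge Lr (rev W) (sw x) (sw y).
Proof.
by case: x => [s|t]; case: y => [s'|t'] //=; rewrite /Lr !rev_cat !revK catA.
Qed.

Lemma sw_surj x : exists v, x = sw v.
Proof. by case: x => [s|t]; [exists (inr (rev s))|exists (inl (rev t))]; rewrite /= revK. Qed.

Lemma swap_fwd S T W : Tree' (Gv L W S T) (Ge L W) ->
  Tree' (Gv Lr (rev W) (map rev T) (map rev S)) (Ge Lr (rev W)).
Proof.
apply: (@tree_transfer _ _ _ _ _ _ (fun v w => w = sw v)).
- by move=> ? ? ? -> ->.
- by move=> ? ? ? -> /sw_inj.
- by move=> v _; exists (sw v).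
- by move=> w _; apply: sw_surj.
- by move=> v w ->; apply: sw_P.
- by move=> ? ? ? ? -> -> _ _; apply: sw_E.
Qed.

Lemma swap_bwd S T W : Tree' (Gv Lr (rev W) (map rev T) (map rev S)) (Ge Lr (rev W)) ->
  Tree' (Gv L W S T) (Ge L W).
Proof.
apply: (@tree_transfer _ _ _ _ _ _ (fun w v => w = sw v)).
- by move=> ? ? ? -> /sw_inj.
- by move=> ? ? ? -> ->.
- by move=> w _; apply: sw_surj.
- by move=> v _; exists (sw v).
- by move=> v w ->; apply: iff_sym; apply: sw_P.
- by move=> ? ? ? ? -> -> _ _; apply: iff_sym; apply: sw_E.
Qed.
End Rev.

Lemma map_rev_Alph (A : finType) : map rev (@Alph A) = Alph.
Proof. by rewrite /Alph -map_comp; apply: eq_map. Qed.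

Section Main.
Variable A : finType.
Variables (L : seq A -> Prop) (n : nat).
Hypothesis hf : factorial L.
Hypothesis hl : lext L.
Hypothesis hr : rext L.
Hypothesis hd : forall W, n <= size W -> Tree' (Gv L W Alph Alph) (Ge L W).

Lemma rightind S : (forall W, n <= size W -> Tree' (Gv L W S Alph) (Ge L W)) ->
  forall T, goodR L T -> forall W, n <= size W -> Tree' (Gv L W S T) (Ge L W).
Proof.
move=> hS T hT W hW; apply: (@swap_bwd A L S T W).
apply: (@leftind A (Lr L) n (map rev S) (fact_rev hf) (lext_rev hr)); last by rewrite size_rev.
  move=> W' hW'; rewrite -[W']revK -map_rev_Alph; apply: swap_fwd; apply: hS.
  by rewrite size_rev.
exact: good_rev.
Qed.

Lemma main_tree S T W : goodL L S -> goodR L T -> n <= size W -> Tree' (Gv L W S T) (Ge L W).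
Proof.
move=> hS hT hW; apply: (@leftind A L n T hf hl) => //.
move=> W' hW'; exact: (rightind hd hT hW').
Qed.
End Main.


Section Lang.
Variable A : finType.
Variable X : (Z -> A) -> Prop.

Lemma window_nth (x : Z -> A) i N k d : (k < N)%N -> nth d (window x i N) k = x (Z.add i (Z.of_nat k)).
Proof. by move=> h; rewrite /window nth_mkseq. Qed.

Lemma size_window (x : Z -> A) i N : size (window x i N) = N.
Proof. exact: size_mkseq. Qed.

Lemma Lang_fact : factorial (Lang X).
Proof.
move=> u v w [x [i [hx e]]]; exists x, (Z.add i (Z.of_nat (size u))); split=> //.
case: v e => [|d v'] e; first by rewrite /window.
apply: (@eq_from_nth _ d); first by rewrite size_window.
move=> k; rewrite size_window => hk.
rewrite window_nth //.
have : nth d (u ++ (d :: v') ++ w) (size u + k) = nth d (d :: v') k.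
  by rewrite nth_cat ltnNge leq_addr addKn nth_cat hk.
rewrite -e window_nth; last by rewrite !size_cat /=; move: hk => /=; lia.
move=> <-; congr (x _); lia.
Qed.

Lemma Lang_lext : lext (Lang X).
Proof.
move=> w [x [i [hx e]]]; exists (x (Z.sub i 1)), x, (Z.sub i 1); split=> //.
apply: (@eq_from_nth _ (x i)); first by rewrite size_window.
move=> k; rewrite size_window => hk; rewrite window_nth //.
case: k hk => [|k] hk /=; first by congr (x _); lia.
rewrite -e window_nth //; congr (x _); lia.
Qed.

Lemma Lang_rext : rext (Lang X).
Proof.
move=> w [x [i [hx e]]]; exists (x (Z.add i (Z.of_nat (size w)))), x, i; split=> //.
apply: (@eq_from_nth _ (x i)); first by rewrite size_window.
move=> k; rewrite size_window => hk; rewrite window_nth // nth_rcons.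
rewrite size_rcons in hk.
case: ltnP => h.
  by rewrite -e window_nth.
have -> : k = size w by lia.
by rewrite eqxx.
Qed.
End Lang.

Section Goodness.
Variable A : finType.
Implicit Types (L : seq A -> Prop).

Lemma prefix_cmp (a b c : seq A) : prefix a c -> prefix b c -> size a <= size b -> prefix a b.
Proof.
rewrite !prefixE => /eqP ea /eqP eb h.
by rewrite -eb take_takel // ea eqxx.
Qed.

Lemma suffix_cmp (a b c : seq A) : suffix a c -> suffix b c -> size a <= size b -> suffix a b.
Proof.
rewrite /suffix => ha hb h; apply: prefix_cmp ha hb _; by rewrite !size_rev.
Qed.

Lemma lext_iter L : lext L -> forall k w, L w -> exists z, size z = k /\ L (z ++ w).
Proof.
move=> hl; elim=> [|k IH] w hw; first by exists [::].
have [z [hz hzw]] := IH w hw; have [a ha] := hl _ hzw.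
by exists (a :: z); split; [rewrite /= hz|].
Qed.

Lemma rext_iter L : rext L -> forall k w, L w -> exists z, size z = k /\ L (w ++ z).
Proof.
move=> hr; elim=> [|k IH] w hw; first by exists [::]; rewrite cats0.
have [z [hz hzw]] := IH w hw; have [a ha] := hr _ hzw.
by exists (rcons z a); split; [rewrite size_rcons hz|rewrite -rcons_cat].
Qed.

Lemma goodL_of L (U : seq (seq A)) : lext L ->
  (forall u v, u \in U -> v \in U -> suffix u v -> u = v) ->
  (exists N, forall w, L w -> N <= size w -> exists2 u, u \in U & suffix u w) -> goodL L U.
Proof.
move=> hl hc [N hN]; split=> // z hz.
have [p [hp hpz]] := lext_iter hl N hz.
have hs : N <= size (p ++ z) by rewrite size_cat hp leq_addr.
have [u uU hu] := hN _ hpz hs.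
have hz' : suffix z (p ++ z) by exact: suffix_suffix.
case: (leqP (size u) (size z)) => h.
  by left; exists u => //; exact: suffix_cmp hu hz' h.
right; exists u => //; split; first by apply: suffix_cmp hz' hu _; exact: ltnW.
by apply/eqP => e; rewrite e ltnn in h.
Qed.

Lemma goodR_of L (U : seq (seq A)) : rext L ->
  (forall u v, u \in U -> v \in U -> prefix u v -> u = v) ->
  (exists N, forall w, L w -> N <= size w -> exists2 u, u \in U & prefix u w) -> goodR L U.
Proof.
move=> hr hc [N hN]; split=> // z hz.
have [p [hp hpz]] := rext_iter hr N hz.
have hs : N <= size (z ++ p) by rewrite size_cat hp leq_addl.
have [u uU hu] := hN _ hpz hs.
have hz' : prefix z (z ++ p) by exact: prefix_prefix.
case: (leqP (size u) (size z)) => h.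
  by left; exists u => //; exact: prefix_cmp hu hz' h.
right; exists u => //; split; first by apply: prefix_cmp hz' hu _; exact: ltnW.
by apply/eqP => e; rewrite e ltnn in h.
Qed.

Lemma tree_empty (V : eqType) (P : V -> Prop) (E : V -> V -> Prop) :
  (forall x, ~ P x) -> Tree' P E.
Proof. by move=> h; split=> [u v /h|a b /h]. Qed.
End Goodness.


Lemma dendric_base (A : finType) (X : (Z -> A) -> Prop) n :
  eventually_dendric X n ->
  forall W, n <= size W -> Tree' (Gv (Lang X) W Alph Alph) (Ge (Lang X) W).
Proof.
move=> hd W hW.
have hf := @Lang_fact A X.
case: (classic (Lang X W)) => hLW; last first.
  apply: tree_empty; case=> [s|t] [_ h]; apply: hLW.
    exact: (fact_r hf (u := s) h).
  exact: (fact_l hf (v := t) h).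
have hirr : forall x, ~ ext_edge (Lang X) W x x by move=> [a|a] /=.
have T0 := tree_of_defs hirr (hd W hLW hW).
pose g (x : A + A) : seq A + seq A := match x with inl a => inl [:: a] | inr b => inr [:: b] end.
apply: (@tree_transfer _ _ _ _ _ _ (fun v w => w = g v) _ _ _ _ _ _ T0).
- by move=> ? ? ? -> ->.
- by move=> [a|b] [a'|b'] w -> //= [] ->.
- by move=> v _; exists (g v).
- case=> [s|t] [/mem_Alph [c ->] _]; [exists (inl c)|exists (inr c)]; by [].
- move=> [a|b] w -> /=.
    split; last by case.
    by move=> h; split=> //; apply/mem_Alph; exists a.
  rewrite cats1; split; last by case.
  by move=> h; split=> //; apply/mem_Alph; exists b.
- by move=> [a|b] [a'|b'] w1 w2 -> -> _ _ //=; rewrite cats1.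
Qed.

Lemma size_flatten_ge (A B : Type) (phi : B -> seq A) (w : seq B) :
  (forall b, 0 < size (phi b)) -> size w <= size (morph_ext phi w).
Proof.
move=> h; rewrite /morph_ext; elim: w => //= b w IH.
rewrite size_cat; have := h b; lia.
Qed.

Unset Implicit Arguments.
Theorem mainTheorem19 (A : finType) (X : (Z -> A) -> Prop) (n : nat)
  (U : seq (seq A)) (B : finType) (phi : B -> seq A) (Y : (Z -> B) -> Prop) :
  is_shift_space X ->
  eventually_dendric X n ->
  (forall u, u \in U -> Lang X u) ->
  bifix_code U ->
  two_sided_complete X U ->
  (* phi : B -> U is a bijection (coding morphism) *)
  injective phi ->
  (forall u, u \in U <-> exists b, phi b = u) ->
  (* Y is the complete bifix decoding: the shift space with language phi^{-1}(L(X)) *)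
  is_shift_space Y ->
  (forall v : seq B, Lang Y v <-> Lang X (morph_ext phi v)) ->
  eventually_dendric Y n.
Proof.
move=> _ hdX _ hbif [hrc hlc] hinj hU _ hY w hw hn.
pose L := Lang X.
have hf : factorial L := @Lang_fact A X.
have hl : lext L := @Lang_lext A X.
have hr : rext L := @Lang_rext A X.
pose W := morph_ext phi w.
have hphiU : forall b, phi b \in U by move=> b; apply/hU; exists b.
have Htree : Tree' (Gv L W U U) (Ge L W).
  case h0 : ([::] \in U).
    apply: star => // s sU; apply: esym; apply: (hbif _ _ h0 sU).1; exact: prefix0s.
  apply: (main_tree hf hl hr (dendric_base hdX)).
  - apply: goodL_of => //; by move=> u v uU vU; apply: (hbif u v uU vU).2.
  - apply: goodR_of => //; by move=> u v uU vU; apply: (hbif u v uU vU).1.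
  apply: leq_trans hn (size_flatten_ge _ _).
  move=> b; case: (phi b) (hphiU b) => //; by rewrite h0.
rewrite /E1_is_tree; apply: defs_of_tree.
pose h (x : B + B) : seq A + seq A := match x with inl b => inl (phi b) | inr b => inr (phi b) end.
apply: (@tree_transfer _ _ _ _ _ _ (fun v w' => v = h w') _ _ _ _ _ _ Htree).
- by move=> v [a|b] [a'|b'] -> //= [] /hinj ->.
- by move=> ? ? ? -> ->.
- case=> [s|t] [sU _]; have [b eb] := (hU _).1 sU; [exists (inl b)|exists (inr b)]; by rewrite /= eb.
- by move=> w' _; exists (h w').
- move=> v [a|b] -> /=; rewrite hY /morph_ext.
    by split; [case|split].
  rewrite map_rcons flatten_rcons.
  by split; [case|split].
- move=> v1 v2 [a|b] [a'|b'] -> -> _ _ //=; rewrite hY /morph_ext /= map_rcons flatten_rcons.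
  all: exact: iff_refl.
Qed.
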